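(* Let $\mathbb P$ be an LTF and $n<\omega$. Then: (i) if $T\in\mathbf{LT}$ and $s_0\in 2^n$, then $T(\to s_0)\in\mathbb P$ iff $T\in\mathbf{LC}_n(\mathbb P)$; (ii) if $P\in\mathbf{LC}_n(\mathbb P)$, $s_0\in 2^n$, $S\in\mathbb P$ and $S\subseteq P(\to s_0)$, then there is $Q\in\mathbf{LC}_n(\mathbb P)$ with $Q\subseteq_n P$ and $Q(\to s_0)=S$; (iii) if $P\in\mathbf{LC}_n(\mathbb P)$ and $D\subseteq\mathbb P$ is open dense in $\mathbb P$, then there is $Q\in\mathbf{LC}_n(\mathbb P)$ with $Q\subseteq_n P$ and $Q(\to s)\in D$ for all $s\in 2^n$; (iv) if $P\in\mathbf{LC}_n(\mathbb P)$, $S,T\in\mathbb P$, $s,t\in 2^n$, $S\subseteq P(\to s^\frown 0)$, $T\subseteq P(\to t^\frown 1)$, $\sigma\in 2^{<\omega}$ and $T=\sigma\cdot S$, then there is $Q\in\mathbf{LC}_{n+1}(\mathbb P)$ with $Q\subseteq_{n+1}P$, $Q(\to s^\frown0)\subseteq S$ and $Q(\to t^\frown1)\subseteq T$.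
   Context: Notation. $2^{<\omega}$ is the set of finite binary strings, $\Lambda$ the empty string, $\mathrm{lh}(s)$ the length of $s$, $2^n$ the set of strings of length $n$, $s\subseteq t$ means $t$ extends $s$, $s^\frown t$ concatenation. For strings $s,t$ with $\mathrm{lh}(s)\le\mathrm{lh}(t)$, $s\cdot t$ is the string of length $\mathrm{lh}(t)$ with $(s\cdot t)(k)=t(k)+s(k)\bmod 2$ for $k<\mathrm{lh}(s)$ and $(s\cdot t)(k)=t(k)$ otherwise; if $\mathrm{lh}(s)>\mathrm{lh}(t)$ then $s\cdot t=(s\restriction\mathrm{lh}(t))\cdot t$. For $T\subseteq 2^{<\omega}$, $s\cdot T=\{s\cdot t:t\in T\}$. For a tree $T$ and $s\in T$, $T\upharpoonright s=\{t\in T:s\subseteq t\lor t\subseteq s\}$. A perfect tree is a nonempty tree $T\subseteq 2^{<\omega}$ with no endpoints and no isolated branches; its stem $\mathrm{stem}(T)$ is the largest $s\in T$ with $T=T\upharpoonright s$. A perfect tree $T$ is large, written $T\in\mathbf{LT}$, if there are nonempty strings $q^i_n$ ($n<\omega$, $i=0,1$) with $\mathrm{lh}(q^0_n)=\mathrm{lh}(q^1_n)\ge1$ and $q^i_n(0)=i$, such that $T$ consists exactly of all initial segments of strings $r^\frown q^{i(0)}_0{}^\frown\cdots{}^\frown q^{i(n)}_n$, where $r=\mathrm{stem}(T)$, $n<\omega$, $i(0),\dots,i(n)\in\{0,1\}$. Its splitting levels are $\mathrm{spl}_0(T)=\mathrm{lh}(r)$, $\mathrm{spl}_{n+1}(T)=\mathrm{spl}_n(T)+\mathrm{lh}(q^0_n)$.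 For $T\in\mathbf{LT}$ and $i\in\{0,1\}$, $T(\to i)=T\upharpoonright(\mathrm{stem}(T)^\frown i)$; for $s\in 2^n$ with $n\ge1$, $T(\to s)=(\cdots((T(\to s(0)))(\to s(1)))\cdots)(\to s(n-1))$, and $T(\to\Lambda)=T$. For $S,T\in\mathbf{LT}$ and $n<\omega$, $S\subseteq_n T$ means $S\subseteq T$ and $\mathrm{spl}_k(S)=\mathrm{spl}_k(T)$ for all $k<n$. A large-tree forcing notion (LTF) is a set $\mathbb P\subseteq\mathbf{LT}$ such that $T\upharpoonright u\in\mathbb P$ whenever $u\in T\in\mathbb P$, and $s\cdot T\in\mathbb P$ whenever $T\in\mathbb P$ and $s\in 2^{<\omega}$; it is ordered by inclusion (smaller trees are stronger conditions). A tree $T\in\mathbf{LT}$ is an $n$-collage over $\mathbb P$ if $T(\to s)\in\mathbb P$ for all $s\in 2^n$; $\mathbf{LC}_n(\mathbb P)$ denotes the set of such trees. *)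

(* Defs.v *)
From mathcomp Require Import all_boot.
Set Implicit Arguments. Unset Strict Implicit. Unset Printing Implicit Defensive.

Definition str := seq bool.
Definition tree := str -> Prop.

(* s ⊆ t  (t extends s) is [prefix s t]. *)
Definition comparable (s t : str) : bool := prefix s t || prefix t s.

Definition sdot (s t : str) : str :=
  mkseq (fun k => nth false t k (+) nth false s k) (size t).

Definition sdotT (s : str) (T : tree) : tree :=
  fun u => exists t, T t /\ u = sdot s t.

Definition subtree (S T : tree) : Prop := forall t, S t -> T t.

Definition restr (T : tree) (u : str) : tree :=
  fun t => T t /\ comparable u t.

Definition is_tree (T : tree) : Prop :=
  (exists t, T t) /\ (forall s t, T t -> prefix s t -> T s).

Definition perfect_tree (T : tree) : Prop :=
  is_tree T /\
  (forall t, T t -> exists b, T (rcons t b)) /\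
  (forall t, T t -> exists u, prefix t u /\ T (rcons u false) /\ T (rcons u true)).

(* stem(T): the largest s ∈ T with T = T ↾ s *)
Definition is_stem (T : tree) (r : str) : Prop :=
  T r /\ (forall t, T t -> comparable r t) /\
  (forall s, T s -> (forall t, T t -> comparable s t) -> prefix s r).

Definition blocks (q0 q1 : nat -> str) (i : nat -> bool) (m : nat) : str :=
  flatten [seq (if i k then q1 k else q0 k) | k <- iota 0 m.+1].

Definition valid_q (q0 q1 : nat -> str) : Prop :=
  forall k, size (q0 k) = size (q1 k) /\ 1 <= size (q0 k) /\
            nth true (q0 k) 0 = false /\ nth false (q1 k) 0 = true.

Definition LT_rep (T : tree) (r : str) (q0 q1 : nat -> str) : Prop :=
  perfect_tree T /\ is_stem T r /\ valid_q q0 q1 /\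
  (forall t, T t <-> exists m i, prefix t (r ++ blocks q0 q1 i m)).

Definition LT (T : tree) : Prop := exists r q0 q1, LT_rep T r q0 q1.

Definition is_spl (T : tree) (k l : nat) : Prop :=
  exists r q0 q1, LT_rep T r q0 q1 /\
    l = size r + sumn [seq size (q0 j) | j <- iota 0 k].

Definition to1 (T : tree) (i : bool) : tree :=
  fun t => T t /\ exists r, is_stem T r /\ comparable (rcons r i) t.

Definition to (T : tree) (s : str) : tree := foldl to1 T s.

Definition sub_n (n : nat) (S T : tree) : Prop :=
  subtree S T /\ forall k, k < n -> exists l, is_spl S k l /\ is_spl T k l.

Definition LTF (PP : tree -> Prop) : Prop :=
  (forall T, PP T -> LT T) /\
  (forall T u, PP T -> T u -> PP (restr T u)) /\
  (forall T s, PP T -> PP (sdotT s T)).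

Definition LC (n : nat) (PP : tree -> Prop) (T : tree) : Prop :=
  LT T /\ forall s : str, size s = n -> PP (to T s).

(* D ⊆ PP is open dense in PP (order: inclusion, smaller = stronger) *)
Definition open_dense (PP D : tree -> Prop) : Prop :=
  (forall T, D T -> PP T) /\
  (forall S T, D T -> PP S -> subtree S T -> D S) /\
  (forall T, PP T -> exists S, D S /\ subtree S T).

(* Main.v *)
Require Import Defs.
From mathcomp Require Import all_boot.
From Stdlib Require Import FunctionalExtensionality PropExtensionality.
Set Implicit Arguments. Unset Strict Implicit. Unset Printing Implicit Defensive.
Local Notation comparable := Defs.comparable.

Lemma prefix_nthP (s t : str) : prefix s t <->
  size s <= size t /\ (forall i, i < size s -> nth false s i = nth false t i).
Proof.
split.
- move/prefixP=> [w ->]; rewrite size_cat; split; first by apply: leq_addr.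
  by move=> i Hi; rewrite nth_cat Hi.
- move=> [H1 H2]; rewrite prefixE; apply/eqP; apply: (eq_from_nth (x0:=false)).
  + by rewrite size_take; apply/minn_idPl.
  + move=> i; rewrite size_take => Hi.
    have Hi' : i < size s by move: Hi; rewrite /minn; case: ifP => // /negbT; rewrite -leqNgt => H3 H4; apply: leq_trans H4 H3.
    by rewrite nth_take // H2.
Qed.

Lemma comp_of_prefix (s t u : str) : prefix s u -> prefix t u -> comparable s t.
Proof.
move=> /prefix_nthP [a1 a2] /prefix_nthP [b1 b2]; rewrite /comparable.
case: (leqP (size s) (size t)) => H.
- apply/orP; left; apply/prefix_nthP; split => // i Hi.
  rewrite a2 // b2 //; exact: leq_trans Hi H.
- apply/orP; right; apply/prefix_nthP; split; first exact: ltnW.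
  move=> i Hi; rewrite a2 ?b2 //; exact: ltn_trans Hi H.
Qed.

Lemma comp_nth (s t : str) i : comparable s t -> i < size s -> i < size t ->
  nth false s i = nth false t i.
Proof.
case/orP => /prefix_nthP [H1 H2] Hs Ht; first by rewrite H2.
by rewrite H2.
Qed.

Lemma comp_size_prefix (s t : str) : comparable s t -> size s <= size t -> prefix s t.
Proof.
case/orP => // /prefix_nthP [H1 H2] H3.
have E : size s = size t by apply/eqP; rewrite eqn_leq H1 H3.
apply/prefix_nthP; split => // i Hi; rewrite H2 //; by rewrite -E.
Qed.

Lemma prefix_antisym (s t : str) : prefix s t -> prefix t s -> s = t.
Proof.
move=> /prefix_nthP [a1 a2] /prefix_nthP [b1 b2].
apply: (eq_from_nth (x0:=false)); first by apply/eqP; rewrite eqn_leq a1 b1.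
by move=> i Hi; rewrite a2.
Qed.

Lemma prefix_rcons_nth (t u : str) : prefix t u -> size t < size u ->
  prefix (rcons t (nth false u (size t))) u.
Proof.
move=> /prefix_nthP [a1 a2] H; apply/prefix_nthP; rewrite size_rcons; split => //.
move=> i Hi; rewrite nth_rcons; case: ltngtP => Hc.
- by rewrite a2.
- by move: Hi; rewrite ltnS leqNgt Hc.
- by rewrite Hc.
Qed.

Lemma size_sdot s t : size (sdot s t) = size t.
Proof. by rewrite /sdot size_mkseq. Qed.

Lemma nth_sdot s t i : i < size t -> nth false (sdot s t) i = nth false t i (+) nth false s i.
Proof. by move=> H; rewrite /sdot nth_mkseq. Qed.

Lemma sdotK s t : sdot s (sdot s t) = t.
Proof.
apply: (eq_from_nth (x0:=false)); rewrite !size_sdot // => i Hi.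
by rewrite !nth_sdot ?size_sdot // addbK.
Qed.

Lemma sdot_xor a b : size a = size b -> sdot (sdot a b) a = b.
Proof.
move=> E; apply: (eq_from_nth (x0:=false)); rewrite !size_sdot // => i Hi.
rewrite !nth_sdot -?E // ?size_sdot -?E //. by rewrite addbC addbK.
Qed.

Lemma sdot_cat s a b : size s <= size a -> sdot s (a ++ b) = sdot s a ++ b.
Proof.
move=> H; apply: (eq_from_nth (x0:=false)).
  by rewrite size_sdot !size_cat size_sdot.
rewrite size_sdot => i Hi; rewrite nth_sdot // !nth_cat size_sdot.
case: ltnP => Hia; first by rewrite nth_sdot.
by rewrite (nth_default false (leq_trans H Hia)) addbF.
Qed.

Lemma sdot_prefix s t u : prefix t u -> prefix (sdot s t) (sdot s u).
Proof.
move=> /prefix_nthP [a1 a2]; apply/prefix_nthP; rewrite !size_sdot; split => //.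
move=> i Hi; rewrite !nth_sdot ?a2 //; exact: leq_trans Hi a1.
Qed.

Definition sel (q0 q1 : nat -> str) (b : bool) k := if b then q1 k else q0 k.
Definition B q0 q1 (i : nat -> bool) m := flatten (mkseq (fun k => sel q0 q1 (i k) k) m).
Definition shiftn n (q : nat -> str) := fun k => q (n + k).
Definition pre q0 q1 (s : str) := B q0 q1 (fun k => nth false s k) (size s).
Definition LTt r q0 q1 : tree := fun t => exists i m, prefix t (r ++ B q0 q1 i m).

Lemma B_S q0 q1 i m : B q0 q1 i m.+1 = B q0 q1 i m ++ sel q0 q1 (i m) m.
Proof. by rewrite /B mkseqS flatten_rcons. Qed.

Lemma B0 q0 q1 i : B q0 q1 i 0 = [::].
Proof. by []. Qed.

Lemma B_ext q0 q1 q0' q1' i j m :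
  (forall k, k < m -> sel q0 q1 (i k) k = sel q0' q1' (j k) k) ->
  B q0 q1 i m = B q0' q1' j m.
Proof.
elim: m => [|m IH] H //; rewrite !B_S IH ?H // => k Hk; apply: H; exact: ltnW.
Qed.

Lemma sel_shift n q0 q1 b k : sel (shiftn n q0) (shiftn n q1) b k = sel q0 q1 b (n + k).
Proof. by case: b. Qed.

Lemma B_cons q0 q1 i m : B q0 q1 i m.+1 =
  sel q0 q1 (i 0) 0 ++ B (shiftn 1 q0) (shiftn 1 q1) (fun k => i k.+1) m.
Proof.
elim: m => [|m IH]; first by rewrite B_S B0 cats0.
by rewrite B_S IH B_S catA sel_shift.
Qed.

Lemma B_add q0 q1 i m k : B q0 q1 i (m + k) =
  B q0 q1 i m ++ B (shiftn m q0) (shiftn m q1) (fun j => i (m + j)) k.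
Proof.
elim: k => [|k IH]; first by rewrite addn0 B0 cats0.
by rewrite addnS !B_S IH catA sel_shift.
Qed.

Lemma B_prefix q0 q1 i m m' : m <= m' -> prefix (B q0 q1 i m) (B q0 q1 i m').
Proof. move/subnKC=> E; rewrite -E B_add; exact: prefix_prefix. Qed.

Lemma size_sel q0 q1 b k : valid_q q0 q1 -> size (sel q0 q1 b k) = size (q0 k).
Proof. by move=> V; case: b => //=; case: (V k). Qed.

Lemma size_sel_gt0 q0 q1 b k : valid_q q0 q1 -> 0 < size (sel q0 q1 b k).
Proof. by move=> V; rewrite size_sel //; case: (V k) => _ []. Qed.

Lemma nth_sel0 q0 q1 b k : valid_q q0 q1 -> nth false (sel q0 q1 b k) 0 = b.
Proof.
move=> V; case: (V k) => E [H1 [H2 H3]]; case: b => //=.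
by rewrite (set_nth_default true) // -E.
Qed.

Lemma prefix_sel q0 q1 b k : valid_q q0 q1 -> prefix [:: b] (sel q0 q1 b k).
Proof.
move=> V; apply/prefix_nthP; split; first exact: size_sel_gt0.
by case=> // _; rewrite nth_sel0.
Qed.

Lemma size_B q0 q1 i j m : valid_q q0 q1 -> size (B q0 q1 i m) = size (B q0 q1 j m).
Proof. by move=> V; elim: m => // m IH; rewrite !B_S !size_cat IH !size_sel. Qed.

Lemma size_B_ge q0 q1 i m : valid_q q0 q1 -> m <= size (B q0 q1 i m).
Proof.
move=> V; elim: m => // m IH; rewrite B_S size_cat -addn1.
apply: leq_add => //; exact: size_sel_gt0.
Qed.

Lemma valid_shift n q0 q1 : valid_q q0 q1 -> valid_q (shiftn n q0) (shiftn n q1).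
Proof. by move=> V k; apply: V. Qed.

Lemma pre_nil q0 q1 : pre q0 q1 [::] = [::].
Proof. by []. Qed.

Lemma pre_cons q0 q1 b s : pre q0 q1 (b :: s) = sel q0 q1 b 0 ++ pre (shiftn 1 q0) (shiftn 1 q1) s.
Proof. by rewrite /pre /= B_cons. Qed.

Lemma pre_rcons q0 q1 s b : pre q0 q1 (rcons s b) = pre q0 q1 s ++ sel q0 q1 b (size s).
Proof.
rewrite /pre size_rcons B_S nth_rcons ltnn eqxx; congr (_ ++ _).
apply: B_ext => k Hk; by rewrite nth_rcons Hk.
Qed.

Lemma size_pre q0 q1 s s' : valid_q q0 q1 -> size s = size s' ->
  size (pre q0 q1 s) = size (pre q0 q1 s').
Proof. by move=> V E; rewrite /pre E; apply: size_B. Qed.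

Lemma size_pre_ge q0 q1 s : valid_q q0 q1 -> size s <= size (pre q0 q1 s).
Proof. by move=> V; apply: size_B_ge. Qed.

Lemma pre_mkseq q0 q1 i n : pre q0 q1 (mkseq i n) = B q0 q1 i n.
Proof. rewrite /pre size_mkseq; apply: B_ext => k Hk; by rewrite nth_mkseq. Qed.

Lemma shiftn0 (q : nat -> str) : shiftn 0 q = q.
Proof. by apply: functional_extensionality. Qed.

Lemma shiftnS n (q : nat -> str) : shiftn n (shiftn 1 q) = shiftn n.+1 q.
Proof. by apply: functional_extensionality => k; rewrite /shiftn add1n addSn. Qed.

Lemma shiftn_add n m (q : nat -> str) : shiftn n (shiftn m q) = shiftn (m + n) q.
Proof. by apply: functional_extensionality => k; rewrite /shiftn addnA. Qed.

Lemma LTt_closed r q0 q1 s t : LTt r q0 q1 t -> prefix s t -> LTt r q0 q1 s.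
Proof. move=> [i [m H]] H'; exists i, m; exact: prefix_trans H' H. Qed.

Lemma LTt_mono r q0 q1 i m m' t : prefix t (r ++ B q0 q1 i m) -> m <= m' ->
  prefix t (r ++ B q0 q1 i m').
Proof.
move=> H Hm; apply: (prefix_trans H).
have [w Ew] := prefixP (B_prefix q0 q1 i Hm).
rewrite Ew catA; exact: prefix_prefix.
Qed.

Lemma LTt_in r q0 q1 i m : LTt r q0 q1 (r ++ B q0 q1 i m).
Proof. rewrite /LTt; exists i, m; exact: prefix_refl. Qed.

Lemma LTt_comp r q0 q1 t : LTt r q0 q1 t -> comparable r t.
Proof. move=> [i [m H]]; apply: (comp_of_prefix _ H); exact: prefix_prefix. Qed.

Lemma tree_ext (S T : tree) : (forall t, S t <-> T t) -> S = T.
Proof.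
move=> H; apply: functional_extensionality => t; apply: propositional_extensionality; exact: H.
Qed.

Lemma prefix_cat2 (a x y : str) : prefix x y -> prefix (a ++ x) (a ++ y).
Proof. move/prefixP=> [w ->]; rewrite catA; exact: prefix_prefix. Qed.

Lemma comp_sym (s t : str) : comparable s t -> comparable t s.
Proof. by rewrite /comparable orbC. Qed.

Lemma nth_cat_size (r x : str) : nth false (r ++ x) (size r) = nth false x 0.
Proof. by rewrite nth_cat ltnn subnn. Qed.

Lemma LTt_sel r q0 q1 c : LTt r q0 q1 (r ++ sel q0 q1 c 0).
Proof.
rewrite /LTt; exists (fun _ => c), 1; rewrite B_S B0 /=; exact: prefix_refl.
Qed.

Lemma LTt_rcons r q0 q1 c : valid_q q0 q1 -> LTt r q0 q1 (rcons r c).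
Proof.
move=> V; apply: (LTt_closed (LTt_sel r q0 q1 c)); rewrite -cats1.
apply: prefix_cat2; exact: prefix_sel.
Qed.

Lemma blocksE q0 q1 i m : blocks q0 q1 i m = B q0 q1 i m.+1.
Proof. by []. Qed.

Lemma LTt_rep r q0 q1 : valid_q q0 q1 -> LT_rep (LTt r q0 q1) r q0 q1.
Proof.
move=> V; split; [|split; [|split]] => //.
- split; [split|split].
  + exists [::]; rewrite /LTt; exists (fun _ => false), 0; exact: prefix0s.
  + move=> s t Ht Hst; exact: LTt_closed Ht Hst.
  + move=> t [i [m H]].
    have H1 := LTt_mono H (leqnSn m).
    have H2 : size t < size (r ++ B q0 q1 i m.+1).
      apply: (leq_trans _ (_ : size (r ++ B q0 q1 i m) < _)); first exact: size_prefix H.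
      by rewrite B_S catA [X in _ < X]size_cat -[X in X < _]addn0 ltn_add2l size_sel_gt0.
    exists (nth false (r ++ B q0 q1 i m.+1) (size t)); rewrite /LTt.
    exists i, m.+1; exact: prefix_rcons_nth.
  + move=> t [i [m H]]; exists (r ++ B q0 q1 i m); split => //.
    have K c : LTt r q0 q1 (rcons (r ++ B q0 q1 i m) c).
      rewrite /LTt; exists (fun k => if k == m then c else i k), m.+1.
      rewrite B_S eqxx (@B_ext q0 q1 q0 q1 _ i); last first.
        by move=> k Hk; rewrite (ltn_eqF Hk).
      rewrite -cats1 -catA; apply: prefix_cat2; apply: prefix_cat2; exact: prefix_sel.
    by split => //; split; apply: K.
- split; first by rewrite /LTt; exists (fun _ => false), 0; rewrite B0 cats0; exact: prefix_refl.
  split. move=> t Ht. exact (LTt_comp Ht).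
  move=> s Hs Hall; case: (leqP (size s) (size r)) => Hsr.
  + apply: comp_size_prefix => //; apply: comp_sym; exact (LTt_comp Hs).
  + have K c : nth false s (size r) = c.
      rewrite (comp_nth (Hall _ (LTt_sel r q0 q1 c))) //.
      * by rewrite nth_cat_size nth_sel0.
      * by rewrite size_cat -[X in X < _]addn0 ltn_add2l size_sel_gt0.
    by have := K true; rewrite (K false).
- move=> t; split.
  + move=> [i [m H]]; exists m, i; rewrite blocksE; exact: LTt_mono H (leqnSn m).
  + move=> [m [i H]]; rewrite /LTt; exists i, m.+1; by rewrite -blocksE.
Qed.

Lemma LT_rep_eq T r q0 q1 : LT_rep T r q0 q1 -> T = LTt r q0 q1.
Proof.
move=> [_ [_ [_ H]]]; apply: tree_ext => t; rewrite H; split.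
- move=> [m [i Hp]]; rewrite /LTt; exists i, m.+1; by rewrite -blocksE.
- move=> [i [m Hp]]; exists m, i; rewrite blocksE; exact: LTt_mono Hp (leqnSn m).
Qed.

Lemma LT_LTt T : LT T -> exists r q0 q1, valid_q q0 q1 /\ T = LTt r q0 q1.
Proof.
move=> [r [q0 [q1 H]]]; exists r, q0, q1; split; first by case: H => _ [_ []].
exact: LT_rep_eq.
Qed.

Lemma LTt_LT r q0 q1 : valid_q q0 q1 -> LT (LTt r q0 q1).
Proof. move=> V; exists r, q0, q1; exact: LTt_rep. Qed.

Lemma stem_unique T r r' : is_stem T r -> is_stem T r' -> r = r'.
Proof.
move=> [a1 [a2 a3]] [b1 [b2 b3]]; apply: prefix_antisym.
- exact: b3.
- exact: a3.
Qed.

Lemma LTt_stem r q0 q1 : valid_q q0 q1 -> is_stem (LTt r q0 q1) r.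
Proof. by move=> V; case: (LTt_rep r V) => _ []. Qed.

Lemma to1_restr T r b : is_stem T r -> to1 T b = restr T (rcons r b).
Proof.
move=> Hr; apply: tree_ext => t; split.
- move=> [Ht [r' [Hr' Hc]]]; split => //; by rewrite (stem_unique Hr Hr').
- move=> [Ht Hc]; split => //; by exists r.
Qed.

Lemma to1_LTt r q0 q1 b : valid_q q0 q1 ->
  to1 (LTt r q0 q1) b = LTt (r ++ sel q0 q1 b 0) (shiftn 1 q0) (shiftn 1 q1).
Proof.
move=> V; rewrite (to1_restr b (LTt_stem r V)); apply: tree_ext => t; split.
- move=> [[i [m H]] Hc]; case: (leqP (size t) (size r)) => Hs.
  + have Htr : prefix t r.
      apply: comp_size_prefix => //; apply: (comp_of_prefix H); exact: prefix_prefix.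
    rewrite /LTt; exists i, 0; rewrite -catA; exact: prefix_catl.
  + case: m H => [|m] H.
      by move: (size_prefix H); rewrite B0 cats0 leqNgt Hs.
    rewrite B_cons in H.
    have Eb : i 0 = b.
      have /prefix_nthP [_ Hn] := H.
      have E1 := Hn (size r) Hs.
      rewrite nth_cat_size nth_cat size_sel_gt0 // nth_sel0 // in E1.
      have E2 : nth false t (size r) = b.
        rewrite -(comp_nth Hc) ?size_rcons //; by rewrite nth_rcons ltnn eqxx.
      by rewrite -E1 E2.
    rewrite /LTt; exists (fun k => i k.+1), m; by rewrite -catA -Eb.
- move=> [j [m H]]; split.
  + rewrite /LTt; exists (fun k => if k is k'.+1 then j k' else b), m.+1.
    by rewrite B_cons catA.
  + apply: (comp_of_prefix (u := (r ++ sel q0 q1 b 0) ++ B (shiftn 1 q0) (shiftn 1 q1) j m)) => //.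
    rewrite -cats1 -catA; apply: prefix_cat2; apply: prefix_catl; exact: prefix_sel.
Qed.

Lemma to_cons T b s : to T (b :: s) = to (to1 T b) s.
Proof. by []. Qed.

Lemma to_LTt r q0 q1 s : valid_q q0 q1 ->
  to (LTt r q0 q1) s = LTt (r ++ pre q0 q1 s) (shiftn (size s) q0) (shiftn (size s) q1).
Proof.
elim: s r q0 q1 => [|b s IH] r q0 q1 V.
  by rewrite pre_nil cats0 !shiftn0.
rewrite to_cons to1_LTt // IH; last exact: valid_shift.
by rewrite pre_cons catA !shiftnS.
Qed.

Lemma to_sub T s : subtree (to T s) T.
Proof.
elim: s T => [|b s IH] T t //; rewrite to_cons => H.
by case: (IH _ _ H).
Qed.

Lemma PP_to PP T s : LTF PP -> PP T -> PP (to T s).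
Proof.
move=> [H1 [H2 H3]]; elim: s T => [|b s IH] T HT //.
rewrite to_cons; apply: IH.
have [r [q0 [q1 [V E]]]] := LT_LTt (H1 _ HT); subst T.
rewrite (to1_restr b (LTt_stem r V)); apply: H2 => //; exact: LTt_rcons.
Qed.

Lemma LTt_union r q0 q1 n t : valid_q q0 q1 -> LTt r q0 q1 t ->
  exists s, size s = n /\ to (LTt r q0 q1) s t.
Proof.
move=> V [i [m H]]; exists (mkseq i n); rewrite size_mkseq; split => //.
rewrite to_LTt // size_mkseq pre_mkseq /LTt.
exists (fun j => i (n + j)), m; rewrite -catA -B_add.
exact: LTt_mono H (leq_addl n m).
Qed.

Lemma sdotT_mono s S T : subtree S T -> subtree (sdotT s S) (sdotT s T).
Proof. by move=> H u [t [Ht ->]]; exists t; split => //; apply: H. Qed.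

Lemma L_sdot s a p0 p1 : size s <= size a ->
  sdotT s (LTt a p0 p1) = LTt (sdot s a) p0 p1.
Proof.
move=> Hs; apply: tree_ext => u; split.
- move=> [t [[i [m H]] ->]]; rewrite /LTt; exists i, m.
  rewrite -sdot_cat //; exact: sdot_prefix.
- move=> [i [m H]]; exists (sdot s u); rewrite sdotK; split => //.
  rewrite /LTt; exists i, m.
  have -> : a ++ B p0 p1 i m = sdot s (sdot s a ++ B p0 p1 i m).
    by rewrite sdot_cat ?size_sdot // sdotK.
  exact: sdot_prefix.
Qed.

Lemma transl a b e p0 p1 : size a = size b ->
  sdotT (sdot a b) (LTt (a ++ e) p0 p1) = LTt (b ++ e) p0 p1.
Proof.
move=> E; rewrite L_sdot; last by rewrite size_sdot size_cat -E leq_addr.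
by rewrite sdot_cat ?size_sdot -?E // sdot_xor.
Qed.

Lemma stem_prefix rS p0 p1 b q0 q1 : valid_q p0 p1 ->
  subtree (LTt rS p0 p1) (LTt b q0 q1) -> prefix b rS.
Proof.
move=> V Hsub.
have K c : comparable b (rcons rS c) by apply: LTt_comp; apply: Hsub; exact: LTt_rcons.
case: (ltnP (size rS) (size b)) => H.
- have K2 c : nth false b (size rS) = c.
    by rewrite (comp_nth (K c)) ?size_rcons // nth_rcons ltnn eqxx.
  by have := K2 true; rewrite (K2 false).
- have Hp : prefix b (rcons rS false) by apply: comp_size_prefix (K false) _; rewrite size_rcons; exact: leq_trans H (leqnSn _).
  move/prefix_nthP: Hp => [_ Hn]; apply/prefix_nthP; split => // i Hi.
  rewrite Hn // nth_rcons; have -> : i < size rS by exact: leq_trans Hi H.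
  by [].
Qed.

Definition glue m (q : nat -> str) (z : str) (p : nat -> str) : nat -> str :=
  fun j => if j < m then q j else if j == m then q m ++ z else p (j - m.+1).

Lemma glue_valid m q0 q1 z0 z1 p0 p1 : valid_q q0 q1 -> valid_q p0 p1 ->
  size z0 = size z1 -> valid_q (glue m q0 z0 p0) (glue m q1 z1 p1).
Proof.
move=> V Vp Ez j; rewrite /glue; case: ltnP => H1; first exact: V.
case: eqP => H2; last exact: Vp.
case: (V m) => E [G [N0 N1]].
rewrite !size_cat E Ez; split => //; split; first by apply: (leq_trans G); rewrite E leq_addr.
by rewrite !nth_cat -E G.
Qed.

Lemma glue_to r m q0 q1 z0 z1 p0 p1 u c : valid_q q0 q1 -> valid_q p0 p1 ->
  size z0 = size z1 -> size u = m ->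
  to (LTt r (glue m q0 z0 p0) (glue m q1 z1 p1)) (rcons u c) =
  LTt (r ++ pre q0 q1 (rcons u c) ++ (if c then z1 else z0)) p0 p1.
Proof.
move=> V Vp Ez Hu; rewrite to_LTt; last exact: glue_valid.
have Es q z p : shiftn (size (rcons u c)) (glue m q z p) = p.
  apply: functional_extensionality => k; rewrite /shiftn /glue size_rcons Hu.
  have h1 : (m.+1 + k < m) = false by apply/negbTE; rewrite -leqNgt addSn ltnW // ltnS leq_addr.
  have h2 : (m.+1 + k == m) = false by apply/negbTE; rewrite neq_ltn addSn ltnS leq_addr orbT.
  by rewrite h1 h2 addKn.
rewrite !Es; clear Es; congr (LTt _ _ _).
have Hpre : pre (glue m q0 z0 p0) (glue m q1 z1 p1) u = pre q0 q1 u.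
  rewrite /pre Hu; apply: B_ext => k Hk; by case: (nth false u k); rewrite /sel /glue Hk.
have Hsel : sel (glue m q0 z0 p0) (glue m q1 z1 p1) c m = sel q0 q1 c m ++ (if c then z1 else z0).
  by case: c; rewrite /sel /glue ltnn eqxx.
by rewrite !pre_rcons Hpre Hu Hsel !catA.
Qed.

Definition splsame n (r : str) (q0 : nat -> str) (r' : str) (q0' : nat -> str) :=
  forall k, k < n -> size r + sumn [seq size (q0 j) | j <- iota 0 k] =
                     size r' + sumn [seq size (q0' j) | j <- iota 0 k].

Lemma glue_splsame m r q0 z p : splsame m.+1 r q0 r (glue m q0 z p).
Proof.
move=> k Hk; congr (_ + sumn _); apply/eq_in_map => j; rewrite mem_iota add0n => Hj.
by rewrite /glue (leq_trans Hj Hk).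
Qed.

Lemma splsame_trans n r q r' q' r'' q'' : splsame n r q r' q' -> splsame n r' q' r'' q'' ->
  splsame n r q r'' q''.
Proof. by move=> H1 H2 k Hk; rewrite H1 // H2. Qed.

Lemma transl0 a b p0 p1 : size a = size b ->
  sdotT (sdot a b) (LTt a p0 p1) = LTt b p0 p1.
Proof. by move=> E; have := transl [::] p0 p1 E; rewrite !cats0. Qed.

Lemma sub_n_of n r q0 q1 r' q0' q1' : valid_q q0 q1 -> valid_q q0' q1' ->
  splsame n r q0 r' q0' -> subtree (LTt r' q0' q1') (LTt r q0 q1) ->
  sub_n n (LTt r' q0' q1') (LTt r q0 q1).
Proof.
move=> V V' Hs Hsub; split => // k Hk.
exists (size r + sumn [seq size (q0 j) | j <- iota 0 k]); split.
- exists r', q0', q1'; split; first exact: LTt_rep. by rewrite Hs.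
- exists r, q0, q1; split => //; exact: LTt_rep.
Qed.

Lemma sub_of_to n r q0 q1 r' q0' q1' : valid_q q0' q1' ->
  (forall s, size s = n -> subtree (to (LTt r' q0' q1') s) (to (LTt r q0 q1) s)) ->
  subtree (LTt r' q0' q1') (LTt r q0 q1).
Proof.
move=> V' H t Ht; have [s [Hs Ht']] := LTt_union n V' Ht.
exact: (to_sub (H s Hs t Ht')).
Qed.

Lemma rcons_case (s : str) n : size s = n.+1 -> exists u c, s = rcons u c /\ size u = n.
Proof. case/lastP: s => [|u c] //; rewrite size_rcons => [[<-]]; by exists u, c. Qed.

Lemma core2 PP n r q0 q1 S s0 : LTF PP -> valid_q q0 q1 -> size s0 = n -> PP S ->
  subtree S (to (LTt r q0 q1) s0) ->
  exists r' q0' q1', valid_q q0' q1' /\ splsame n r q0 r' q0' /\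
   (forall s, size s = n -> subtree (to (LTt r' q0' q1') s) (to (LTt r q0 q1) s)) /\
   (forall s, size s = n -> PP (to (LTt r' q0' q1') s)) /\ to (LTt r' q0' q1') s0 = S.
Proof.
move=> HL V Hs0 HS Hsub; have [H1 [H2 H3]] := HL.
have [rS [p0 [p1 [Vp ES]]]] := LT_LTt (H1 _ HS); subst S.
case: n Hs0 => [|n] Hs0.
- exists rS, p0, p1; split => //; split; first by move=> k.
  have E0 (s : str) : size s = 0 -> s = [::] by move/size0nil.
  rewrite (E0 _ Hs0) in Hsub *; split; [|split] => // s /E0 -> //.
- have [s1 [b0 [Es1 Hs1]]] := rcons_case Hs0; subst s0.
  rewrite to_LTt // size_rcons Hs1 in Hsub.
  have /prefixP [x Ex] := stem_prefix Vp Hsub.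
  exists r, (glue n q0 x p0), (glue n q1 x p1).
  have Vg := glue_valid n V Vp (erefl (size x)).
  split => //; split; first exact: glue_splsame.
  have HQ u c : size u = n -> to (LTt r (glue n q0 x p0) (glue n q1 x p1)) (rcons u c)
      = LTt ((r ++ pre q0 q1 (rcons u c)) ++ x) p0 p1.
    by move=> Hu; rewrite glue_to //; case: c; rewrite catA.
  have HP u c : size u = n -> to (LTt r q0 q1) (rcons u c) =
      LTt (r ++ pre q0 q1 (rcons u c)) (shiftn n.+1 q0) (shiftn n.+1 q1).
    by move=> Hu; rewrite to_LTt // size_rcons Hu.
  have Hsz u c : size u = n ->
      size (r ++ pre q0 q1 (rcons s1 b0)) = size (r ++ pre q0 q1 (rcons u c)).
    move=> Hu; rewrite !size_cat (@size_pre q0 q1 (rcons s1 b0) (rcons u c)) //.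
    by rewrite !size_rcons Hu Hs1.
  have Ktr u c : size u = n -> to (LTt r (glue n q0 x p0) (glue n q1 x p1)) (rcons u c) =
      sdotT (sdot (r ++ pre q0 q1 (rcons s1 b0)) (r ++ pre q0 q1 (rcons u c))) (LTt rS p0 p1).
    by move=> Hu; rewrite HQ // Ex transl // (Hsz u c Hu).
  split; [|split].
  + move=> s /rcons_case [u [c [-> Hu]]].
    rewrite Ktr // HP // -(transl0 _ _ (Hsz u c Hu)); exact: sdotT_mono.
  + move=> s /rcons_case [u [c [-> Hu]]]; rewrite Ktr //; exact: H3.
  + by rewrite HQ // -Ex.
Qed.

Lemma core4 PP n r q0 q1 S T s t sigma : LTF PP -> valid_q q0 q1 -> PP S -> PP T ->
  size s = n -> size t = n ->
  subtree S (to (LTt r q0 q1) (rcons s false)) -> subtree T (to (LTt r q0 q1) (rcons t true)) ->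
  T = sdotT sigma S ->
  exists r' q0' q1', valid_q q0' q1' /\ splsame n.+1 r q0 r' q0' /\
   (forall w, size w = n.+1 -> subtree (to (LTt r' q0' q1') w) (to (LTt r q0 q1) w)) /\
   (forall w, size w = n.+1 -> PP (to (LTt r' q0' q1') w)) /\
   subtree (to (LTt r' q0' q1') (rcons s false)) S /\
   subtree (to (LTt r' q0' q1') (rcons t true)) T.
Proof.
move=> HL V HS HT Hs Ht HsubS HsubT ET; have [H1 [H2 H3]] := HL.
have [rS [p0 [p1 [Vp ES]]]] := LT_LTt (H1 _ HS); subst S.
have Vp' := valid_shift (size sigma) Vp.
have ES' : to (LTt rS p0 p1) (nseq (size sigma) false) =
    LTt (rS ++ pre p0 p1 (nseq (size sigma) false)) (shiftn (size sigma) p0) (shiftn (size sigma) p1).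
  by rewrite to_LTt // size_nseq.
have PS' : PP (LTt (rS ++ pre p0 p1 (nseq (size sigma) false)) (shiftn (size sigma) p0) (shiftn (size sigma) p1)).
  by rewrite -ES'; apply: PP_to.
have SS' : subtree (LTt (rS ++ pre p0 p1 (nseq (size sigma) false)) (shiftn (size sigma) p0) (shiftn (size sigma) p1)) (LTt rS p0 p1).
  by rewrite -ES'; apply: to_sub.
move: PS' SS' ES'.
set a := rS ++ pre p0 p1 (nseq (size sigma) false).
set p0' := shiftn (size sigma) p0.
set p1' := shiftn (size sigma) p1.
move=> PS' SS' _.
have Hsa : size sigma <= size a.
  rewrite /a size_cat; apply: leq_trans (leq_addl _ _).
  by apply: leq_trans (size_pre_ge _ Vp); rewrite size_nseq.
have HP u c : size u = n -> to (LTt r q0 q1) (rcons u c) =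
    LTt (r ++ pre q0 q1 (rcons u c)) (shiftn n.+1 q0) (shiftn n.+1 q1).
  by move=> Hu; rewrite to_LTt // size_rcons Hu.
rewrite HP // in HsubS; rewrite HP // in HsubT.
have /prefixP [x0 Ex0] : prefix (r ++ pre q0 q1 (rcons s false)) a.
  apply: (prefix_trans (stem_prefix Vp HsubS)); exact: prefix_prefix.
have ET' : sdotT sigma (LTt a p0' p1') = LTt (sdot sigma a) p0' p1' by apply: L_sdot.
have TT' : subtree (sdotT sigma (LTt a p0' p1')) T by rewrite ET; apply: sdotT_mono.
have PT' : PP (sdotT sigma (LTt a p0' p1')) by apply: H3.
have /prefixP [y Ey] : prefix (r ++ pre q0 q1 (rcons t true)) (sdot sigma a).
  apply: (stem_prefix Vp'); rewrite -ET' => u Hu; apply: HsubT; exact: TT'.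
have Hsz u c u' c' : size u = n -> size u' = n ->
    size (r ++ pre q0 q1 (rcons u c)) = size (r ++ pre q0 q1 (rcons u' c')).
  move=> Hu Hu'; rewrite !size_cat (@size_pre q0 q1 (rcons u c) (rcons u' c')) //.
  by rewrite !size_rcons Hu Hu'.
have Exy : size x0 = size y.
  have E1 := f_equal size Ey; have E2 := Hsz s false t true Hs Ht.
  rewrite size_sdot Ex0 !size_cat in E1; rewrite !size_cat in E2.
  by move: E1; rewrite E2 => /eqP; rewrite eqn_add2l => /eqP.
exists r, (glue n q0 x0 p0'), (glue n q1 y p1').
have Vg := glue_valid n V Vp' Exy.
have HQ u c : size u = n -> to (LTt r (glue n q0 x0 p0') (glue n q1 y p1')) (rcons u c)
    = LTt ((r ++ pre q0 q1 (rcons u c)) ++ (if c then y else x0)) p0' p1'.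
  by move=> Hu; rewrite glue_to // catA.
split => //; split; first exact: glue_splsame.
have KtrF u : size u = n -> to (LTt r (glue n q0 x0 p0') (glue n q1 y p1')) (rcons u false) =
    sdotT (sdot (r ++ pre q0 q1 (rcons s false)) (r ++ pre q0 q1 (rcons u false))) (LTt a p0' p1').
  by move=> Hu; rewrite HQ // Ex0 transl // (Hsz s false u false Hs Hu).
have KtrT u : size u = n -> to (LTt r (glue n q0 x0 p0') (glue n q1 y p1')) (rcons u true) =
    sdotT (sdot (r ++ pre q0 q1 (rcons t true)) (r ++ pre q0 q1 (rcons u true)))
      (sdotT sigma (LTt a p0' p1')).
  by move=> Hu; rewrite HQ // ET' Ey transl // (Hsz t true u true Ht Hu).
split; [|split; [|split]].
- move=> w /rcons_case [u [c [-> Hu]]]; rewrite HP //; case: c.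
  + rewrite KtrT // -(transl0 _ _ (Hsz t true u true Ht Hu)); apply: sdotT_mono.
    move=> v Hv; apply: HsubT; exact: TT'.
  + rewrite KtrF // -(transl0 _ _ (Hsz s false u false Hs Hu)); apply: sdotT_mono.
    move=> v Hv; apply: HsubS; exact: SS'.
- move=> w /rcons_case [u [c [-> Hu]]]; case: c.
  + rewrite KtrT //; exact: H3.
  + rewrite KtrF //; exact: H3.
- by rewrite HQ //= -Ex0.
- by rewrite HQ //= -Ey -ET'.
Qed.

Fixpoint allstr n : seq str :=
  if n is n'.+1 then map (cons false) (allstr n') ++ map (cons true) (allstr n') else [:: [::]].

Lemma allstr_all n (s : str) : size s = n -> s \in allstr n.
Proof.
elim: n s => [|n IH] [|b s] //= [Hs]; rewrite mem_cat; case: b.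
- by rewrite (map_f (cons true) (IH _ Hs)) orbT.
- by rewrite (map_f (cons false) (IH _ Hs)).
Qed.

Lemma allstr_size n (s : str) : s \in allstr n -> size s = n.
Proof.
elim: n s => [|n IH] s /=; first by rewrite inE => /eqP ->.
by rewrite mem_cat => /orP [] /mapP [u Hu ->] /=; rewrite (IH _ Hu).
Qed.

Unset Implicit Arguments.
Theorem lemma4p1 (PP : tree -> Prop) (n : nat) : LTF PP ->
  (forall (T : tree) (s0 : str), LT T -> size s0 = n ->
     (PP (to T s0) <-> LC n PP T)) /\
  (forall (P S : tree) (s0 : str), LC n PP P -> size s0 = n -> PP S ->
     subtree S (to P s0) ->
     exists Q, LC n PP Q /\ sub_n n Q P /\ to Q s0 = S) /\
  (forall (P : tree) (D : tree -> Prop), LC n PP P -> open_dense PP D ->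
     exists Q, LC n PP Q /\ sub_n n Q P /\
       forall s : str, size s = n -> D (to Q s)) /\
  (forall (P S T : tree) (s t sigma : str), LC n PP P -> PP S -> PP T ->
     size s = n -> size t = n ->
     subtree S (to P (rcons s false)) -> subtree T (to P (rcons t true)) ->
     T = sdotT sigma S ->
     exists Q, LC n.+1 PP Q /\ sub_n n.+1 Q P /\
       subtree (to Q (rcons s false)) S /\ subtree (to Q (rcons t true)) T).
Proof.
move=> HL; have [H1 [H2 H3]] := HL.
split; [|split; [|split]].
- move=> T s0 HT Hs0; split; last by move=> [_ H]; apply: H.
  move=> HP; split => // s Hs.
  have [r [q0 [q1 [V ET]]]] := LT_LTt HT; subst T.
  rewrite to_LTt // in HP; rewrite to_LTt // Hs; rewrite Hs0 in HP.
  have E : size (r ++ pre q0 q1 s0) = size (r ++ pre q0 q1 s).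
    by rewrite !size_cat (@size_pre q0 q1 s0 s V) // Hs Hs0.
  rewrite -(transl0 _ _ E); exact: H3.
- move=> P S s0 [HLT HPs] Hs0 HS Hsub.
  have [r [q0 [q1 [V EP]]]] := LT_LTt HLT; subst P.
  have [r' [q0' [q1' [V' [Sp [Sub [PPQ EQ]]]]]]] := core2 HL V Hs0 HS Hsub.
  exists (LTt r' q0' q1'); split; first by split; [exact: LTt_LT | exact: PPQ].
  split => //; apply: sub_n_of => //; exact: sub_of_to V' Sub.
- move=> P D [HLT HPs] [D1 [D2 D3]].
  have [r [q0 [q1 [V EP]]]] := LT_LTt HLT; subst P.
  have Claim (L : seq str) : (forall s, s \in L -> size s = n) ->
    exists r' q0' q1', valid_q q0' q1' /\ splsame n r q0 r' q0' /\
     (forall s, size s = n -> subtree (to (LTt r' q0' q1') s) (to (LTt r q0 q1) s)) /\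
     (forall s, size s = n -> PP (to (LTt r' q0' q1') s)) /\
     (forall s, s \in L -> D (to (LTt r' q0' q1') s)).
    elim: L => [|s L IH] HLs.
      exists r, q0, q1; split => //; split; first by [].
      by split => // s _ t.
    have [r1 [q01 [q11 [V1 [Sp1 [Sub1 [PP1 DL1]]]]]]] :
        exists r' q0' q1', valid_q q0' q1' /\ splsame n r q0 r' q0' /\
     (forall s, size s = n -> subtree (to (LTt r' q0' q1') s) (to (LTt r q0 q1) s)) /\
     (forall s, size s = n -> PP (to (LTt r' q0' q1') s)) /\
     (forall s, s \in L -> D (to (LTt r' q0' q1') s)).
      apply: IH => s' Hs'; apply: HLs; by rewrite inE Hs' orbT.
    have Hs : size s = n by apply: HLs; rewrite inE eqxx.
    have [S [DS SS]] := D3 _ (PP1 s Hs).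
    have [r2 [q02 [q12 [V2 [Sp2 [Sub2 [PP2 EQ2]]]]]]] := core2 HL V1 Hs (D1 _ DS) SS.
    exists r2, q02, q12; split => //; split; first exact: splsame_trans Sp1 Sp2.
    split; first by move=> s' Hs' t Ht; apply: Sub1 => //; apply: Sub2.
    split => // s'; rewrite inE => /orP [/eqP -> | Hin]; first by rewrite EQ2.
    apply: (D2 _ _ (DL1 _ Hin)).
      apply: PP2; apply: HLs; by rewrite inE Hin orbT.
    apply: Sub2; apply: HLs; by rewrite inE Hin orbT.
  have [r' [q0' [q1' [V' [Sp [Sub [PPQ DQ]]]]]]] := Claim (allstr n) (@allstr_size n).
  exists (LTt r' q0' q1'); split; first by split; [exact: LTt_LT | exact: PPQ].
  split; first by apply: sub_n_of => //; exact: sub_of_to V' Sub.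
  move=> s Hs; apply: DQ; exact: allstr_all.
- move=> P S T s t sigma [HLT HPs] HS HT Hs Ht HsubS HsubT ET.
  have [r [q0 [q1 [V EP]]]] := LT_LTt HLT; subst P.
  have [r' [q0' [q1' [V' [Sp [Sub [PPQ [QS QT]]]]]]]] := core4 HL V HS HT Hs Ht HsubS HsubT ET.
  exists (LTt r' q0' q1'); split; first by split; [exact: LTt_LT | exact: PPQ].
  split => //; apply: sub_n_of => //; exact: sub_of_to V' Sub.
Qed.
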